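(* Let $n\ge1$, $K=2n$, and let $x_1,\dots,x_n,y_1,\dots,y_n\in\mathbb{R}$. Define $m_k=\sum_{j=1}^n x_j^k-\sum_{j=1}^n y_j^k$ for $k=1,\dots,K$, and $\tilde m=(0,m_1,\dots,m_K)^T\in\mathbb{R}^{K+1}$. Write $$p(x)=(x-x_1)\cdots(x-x_n)=c_0+c_1x+\dots+c_nx^n,\qquad q(x)=(x-y_1)\cdots(x-y_n)=d_0+d_1x+\dots+d_nx^n$$ (so $c_n=d_n=1$), and set $\mathbf{c}=(c_n,c_{n-1},\dots,c_0,0,\dots,0)^T\in\mathbb{R}^{K+1}$ and $\mathbf{d}=(d_n,d_{n-1},\dots,d_0,0,\dots,0)^T\in\mathbb{R}^{K+1}$ (padded with $n$ zeros). Let $\tilde a,\tilde b\in\mathbb{R}^{K+1}$ be the vectors with first entry $1$ satisfying $\mathcal{T}(\tilde m)\tilde a=\Lambda\tilde a$ and $\mathcal{T}(\tilde m)\tilde b=-\Lambda\tilde b$. Then $$\mathcal{T}(\tilde a)\mathbf{c}=\mathbf{d},\qquad \mathcal{T}(\tilde b)\mathbf{d}=\mathbf{c}.$$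
   Context: For $\mathbf{x}=(x_1,\dots,x_N)^T\in\mathbb{R}^N$, $\mathcal{T}(\mathbf{x})$ denotes the $N\times N$ lower triangular Toeplitz matrix whose first column is $\mathbf{x}$, i.e. $\mathcal{T}(\mathbf{x})_{ij}=x_{i-j+1}$ for $i\ge j$ and $0$ for $i<j$. Here $N=K+1$ and $\Lambda=\mathrm{diag}(0,1,2,\dots,K)$. (The conditions on $\tilde a,\tilde b$ are lower triangular systems that determine them uniquely given first entry $1$.) *)

(* Defs.v *)
From HB Require Import structures.
From mathcomp Require Import all_boot all_order all_algebra.
Set Implicit Arguments. Unset Strict Implicit. Unset Printing Implicit Defensive.
Import Order.TTheory GRing.Theory Num.Theory.
Local Open Scope ring_scope.

Definition toeplitz {R : nzRingType} {k : nat} (v : 'cV[R]_k.+1) : 'M[R]_k.+1 :=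
  \matrix_(i, j) if (j <= i)%N then v (inord (i - j)) 0 else 0.

Definition Lambda {R : nzRingType} (k : nat) : 'M[R]_k.+1 :=
  diag_mx (\row_(i < k.+1) (i : nat)%:R).

Definition mom {R : nzRingType} {n : nat} (x y : 'I_n -> R) (k : nat) : R :=
  \sum_(j < n) x j ^+ k - \sum_(j < n) y j ^+ k.

Definition mtilde {R : nzRingType} {n : nat} (x y : 'I_n -> R) : 'cV[R]_(n.*2.+1) :=
  \col_(i < n.*2.+1) (if (i : nat) == 0%N then 0 else mom x y i).

Definition rootpoly {R : nzRingType} {n : nat} (x : 'I_n -> R) : {poly R} :=
  \prod_(j < n) ('X - (x j)%:P).

Definition coefvec {R : nzRingType} (n : nat) (p : {poly R}) : 'cV[R]_(n.*2.+1) :=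
  \col_(i < n.*2.+1) (if (i <= n)%N then p`_(n - i) else 0).

(* Main.v *)
Require Import Defs.

From HB Require Import structures.
From mathcomp Require Import all_boot all_order all_algebra.
Import Order.TTheory GRing.Theory Num.Theory.
Set Implicit Arguments. Unset Strict Implicit. Unset Printing Implicit Defensive.
Local Open Scope ring_scope.

Definition eqK (R : nzRingType) (K : nat) (p q : {poly R}) :=
  forall i, (i <= K)%N -> p`_i = q`_i.

Definition theta (R : nzRingType) (p : {poly R}) := 'X * p^`().

Lemma coef_theta (R : nzRingType) (p : {poly R}) (i : nat) : (theta p)`_i = p`_i *+ i.
Proof. by rewrite /theta coefXM; case: i => [|i] //=; rewrite coef_deriv. Qed.

Lemma thetaM (R : comNzRingType) (p q : {poly R}) :
  theta (p * q) = theta p * q + p * theta q.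
Proof. by rewrite /theta derivM mulrDr !mulrA [p * 'X]mulrC. Qed.

Lemma eqK_mull (R : nzRingType) K (p q r : {poly R}) :
  eqK K p q -> eqK K (p * r) (q * r).
Proof.
move=> h i hi; rewrite !coefM; apply: eq_bigr => j _.
by rewrite h // (leq_trans (leq_ord j) hi).
Qed.

Lemma eqK_mulr (R : comNzRingType) K (p q r : {poly R}) :
  eqK K p q -> eqK K (r * p) (r * q).
Proof. by move=> h; rewrite ![r * _]mulrC; apply: eqK_mull. Qed.

Lemma eqK_add (R : nzRingType) K (p q p' q' : {poly R}) :
  eqK K p q -> eqK K p' q' -> eqK K (p + p') (q + q').
Proof. by move=> h h' i hi; rewrite !coefD h ?h'. Qed.

Lemma eqK_trans (R : nzRingType) K (p q r : {poly R}) :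
  eqK K p q -> eqK K q r -> eqK K p r.
Proof. by move=> h h' i hi; rewrite h ?h'. Qed.

Lemma uniq_ode (R : numFieldType) K (S V W : {poly R}) :
  S`_0 = 0 -> V`_0 = W`_0 -> eqK K (theta V) (- (S * V)) ->
  eqK K (theta W) (- (S * W)) -> eqK K V W.
Proof.
move=> S0 VW0 hV hW.
suff H : forall i, (i <= K)%N -> forall j, (j <= i)%N -> V`_j = W`_j.
  by move=> i hi; apply: (H i hi).
elim=> [|i IH] hi j hj.
  by move: hj; rewrite leqn0 => /eqP ->.
move: hj; rewrite leq_eqVlt => /orP [/eqP ->|hj]; last first.
  by apply: IH => //; apply: ltnW.
have e1 := hV i.+1 hi; have e2 := hW i.+1 hi.
rewrite !coef_theta in e1 e2.
have ES : (S * V)`_i.+1 = (S * W)`_i.+1.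
  rewrite !coefM big_ord_recl [in RHS]big_ord_recl S0 !mul0r !add0r.
  apply: eq_bigr => k _.
  by rewrite IH ?(ltnW hi) // lift0 subSS leq_subr.
apply: (@mulIf _ (i.+1)%:R); first by rewrite pnatr_eq0.
by rewrite !mulr_natr e1 e2 coefN coefN ES.
Qed.

Definition Gz (R : nzRingType) (K : nat) (z : R) : {poly R} :=
  \poly_(k < K.+1) (if k == 0%N then 0 else z ^+ k).
Definition Ez (R : nzRingType) (z : R) : {poly R} := 1 - z *: 'X.

Lemma newton_one (R : comNzRingType) K (z : R) :
  eqK K (theta (Ez z)) (- (Gz K z * Ez z)).
Proof.
move=> i hi; rewrite coef_theta /Ez mulrBr mulr1 -scalerAr !coefN !coefB !coefZ coefMX coef1 coefX !coef_poly.
case: i hi => [|[|k]] hi /=.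
- by rewrite mulr0n !mulr0 subrr oppr0.
- by rewrite ltnS hi !mulr0 mulr1 sub0r subr0 expr1 mulr1n.
- by rewrite !ltnS hi (ltnW hi) mulr0 subr0 mul0rn exprS subrr oppr0.
Qed.

Lemma newton_seq (R : comNzRingType) K (I : Type) (r : seq I) (f : I -> R) :
  eqK K (theta (\prod_(j <- r) Ez (f j)))
        (- ((\sum_(j <- r) Gz K (f j)) * \prod_(j <- r) Ez (f j))).
Proof.
elim: r => [|z r IH].
  by move=> i _; rewrite !big_nil /theta derivC mulr0 mul0r oppr0.
rewrite !big_cons thetaM.
set E := Ez (f z); set P := \prod_(j <- r) Ez (f j); set S := \sum_(j <- r) _.
have -> : - ((Gz K (f z) + S) * (E * P)) = - (Gz K (f z) * E) * P + E * - (S * P).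
  by rewrite mulrDl mulrA [S * _]mulrCA opprD mulNr mulrN.
apply: eqK_add; [apply: eqK_mull; apply: newton_one | apply: eqK_mulr; apply: IH].
Qed.

Lemma rev_seq (R : comNzRingType) (I : Type) (r : seq I) (f : I -> R) (i : nat) :
  (\prod_(j <- r) Ez (f j))`_i =
  if (i <= size r)%N then (\prod_(j <- r) ('X - (f j)%:P))`_(size r - i) else 0.
Proof.
elim: r i => [|z r IH] i.
  by case: i => [|i]; rewrite !big_nil !coef1.
set p := \prod_(j <- r) ('X - (f j)%:P).
have hp : forall k, (size r < k)%N -> p`_k = 0.
  by move=> k hk; apply: nth_default; rewrite size_prod_XsubC.
rewrite !big_cons /Ez mulrBl mul1r -scalerAl coefB coefZ coefXM -/p.
rewrite mulrBl coefB coefXM coefCM /=.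
case: i => [|j].
  rewrite IH subn0 /= (hp (size r).+1) // mulr0 subr0 //.
rewrite /= IH IH ltnS.
case: (ltngtP j (size r)) => hj.
- rewrite -/p subSS subnS.
  by have -> : (size r - j == 0)%N = false by rewrite subn_eq0 leqNgt hj.
- by rewrite mulr0 subrr.
- by rewrite -/p hj subSS subnn /= sub0r.
Qed.

Definition pv (R : nzRingType) (K : nat) (v : 'cV[R]_K.+1) : {poly R} :=
  \poly_(i < K.+1) v (inord i) 0.

Lemma toeplitz_coef (R : comNzRingType) K (v w : 'cV[R]_K.+1) (i : nat) :
  (i <= K)%N -> (toeplitz v *m w) (inord i) 0 = (pv w * pv v)`_i.
Proof.
move=> hi; have hi' : (i.+1 <= K.+1)%N by rewrite ltnS.
rewrite !mxE coefM (@big_ord_widen _ 0 +%R i.+1 K.+1 (fun j => (pv w)`_j * (pv v)`_(i - j)) hi') [RHS]big_mkcond.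
apply: eq_bigr => j _.
rewrite /toeplitz mxE inordK //.
rewrite ltnS; case: ifP => hj; last by rewrite mul0r.
rewrite !coef_poly ltn_ord (leq_ltn_trans (leq_subr j i) hi') inord_val.
by rewrite mulrC.
Qed.

Lemma core (R : numFieldType) K (A M S1 S2 P1 P2 : {poly R}) :
  eqK K (theta A) (M * A) -> eqK K M (S1 - S2) ->
  eqK K (theta P1) (- (S1 * P1)) -> eqK K (theta P2) (- (S2 * P2)) ->
  S2`_0 = 0 -> A`_0 = 1 -> P1`_0 = 1 -> P2`_0 = 1 -> eqK K (A * P1) P2.
Proof.
move=> hA hM h1 h2 S0 A0 P10 P20.
apply: (uniq_ode (S := S2)) => //.
- by rewrite coef0M A0 P10 P20 mulr1.
rewrite thetaM.
apply: (@eqK_trans _ _ _ ((S1 - S2) * A * P1 + A * - (S1 * P1))).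
  apply: eqK_add.
    apply: eqK_mull; apply: eqK_trans hA _; apply: eqK_mull hM.
  by apply: eqK_mulr h1.
have -> : (S1 - S2) * A * P1 + A * - (S1 * P1) = - (S2 * (A * P1)).
  by rewrite !mulrBl mulrN -!mulrA [A * (S1 * P1)]mulrCA addrAC subrr add0r.
by [].
Qed.

Lemma size_ie n : size (index_enum 'I_n) = n.
Proof. by rewrite -[index_enum _](filter_predT) -cardE card_ord. Qed.

Lemma rev_ok (R : comNzRingType) (n : nat) (x : 'I_n -> R) :
  eqK n.*2 (pv (coefvec n (rootpoly x))) (\prod_(j <- index_enum 'I_n) Ez (x j)).
Proof.
move=> i hi; rewrite coef_poly ltnS hi rev_seq size_ie /coefvec mxE inordK ?ltnS //.
Qed.

Lemma prodE0 (R : comNzRingType) (n : nat) (x : 'I_n -> R) :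
  (\prod_(j <- index_enum 'I_n) Ez (x j))`_0 = 1.
Proof.
rewrite -horner_coef0 horner_prod big1 // => j _.
by rewrite /Ez hornerD hornerN hornerZ hornerX hornerC mulr0 subr0.
Qed.

Lemma sum0 (R : comNzRingType) K (n : nat) (x : 'I_n -> R) :
  (\sum_(j <- index_enum 'I_n) Gz K (x j))`_0 = 0.
Proof. by rewrite coef_sum big1 // => j _; rewrite coef_poly. Qed.

Lemma mom_ok (R : comNzRingType) (n : nat) (x y : 'I_n -> R) :
  eqK n.*2 (pv (mtilde x y))
    (\sum_(j <- index_enum 'I_n) Gz n.*2 (x j) - \sum_(j <- index_enum 'I_n) Gz n.*2 (y j)).
Proof.
move=> i hi; rewrite coef_poly ltnS hi /mtilde mxE inordK ?ltnS // coefB !coef_sum.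
case: eqP => [->|/eqP h0].
  by rewrite !big1 ?subrr // => j _; rewrite coef_poly.
rewrite /mom; congr (_ - _); apply: eq_bigr => j _;
  by rewrite coef_poly ltnS hi (negbTE h0).
Qed.

Theorem lemma3 (R : realFieldType) (n : nat) (hn : (1 <= n)%N)
  (x y : 'I_n -> R) (a b : 'cV[R]_(n.*2.+1)) :
  a 0 0 = 1 -> toeplitz (mtilde x y) *m a = Lambda (n.*2) *m a ->
  b 0 0 = 1 -> toeplitz (mtilde x y) *m b = - (Lambda (n.*2) *m b) ->
  toeplitz a *m coefvec n (rootpoly x) = coefvec n (rootpoly y) /\
  toeplitz b *m coefvec n (rootpoly y) = coefvec n (rootpoly x).
Proof.
move=> a0 Ha b0 Hb.
set K := n.*2.
have hpv : forall (v : 'cV[R]_K.+1) i, (i <= K)%N -> v (inord i) 0 = (pv v)`_i.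
  by move=> v i hi; rewrite coef_poly ltnS hi.
have in0 : inord 0 = 0 :> 'I_K.+1 by apply: val_inj; rewrite /= inordK.
have hA : eqK K (theta (pv a)) (pv (mtilde x y) * pv a).
  move=> i hi; have := congr1 (fun X : 'M[R]_(K.+1,1) => X (inord i) 0) Ha => /=.
  rewrite toeplitz_coef // mulrC /Lambda mul_diag_mx !mxE inordK ?ltnS // => ->.
  by rewrite coef_theta coef_poly ltnS hi mulr_natl.
have hB : eqK K (theta (pv b)) (- pv (mtilde x y) * pv b).
  move=> i hi; have := congr1 (fun X : 'M[R]_(K.+1,1) => X (inord i) 0) Hb => /=.
  rewrite toeplitz_coef // mulrC /Lambda mxE mul_diag_mx !mxE inordK ?ltnS //.
  by rewrite mulNr coefN => ->; rewrite opprK coef_theta coef_poly ltnS hi mulr_natl.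
have hM := @mom_ok R n x y.
have hM' : eqK K (- pv (mtilde x y))
    (\sum_(j <- index_enum 'I_n) Gz n.*2 (y j) - \sum_(j <- index_enum 'I_n) Gz n.*2 (x j)).
  by move=> i hi; rewrite coefN hM // coefB coefB opprB.
have nx := @newton_seq R K _ (index_enum 'I_n) x.
have ny := @newton_seq R K _ (index_enum 'I_n) y.
have eA := core hA hM nx ny (sum0 _ _) _ (prodE0 x) (prodE0 y).
have eB := core hB hM' ny nx (sum0 _ _) _ (prodE0 y) (prodE0 x).
split; apply/matrixP => i j; rewrite (ord1 j); have hi : (i <= K)%N by rewrite -ltnS.
- rewrite -(inord_val i) toeplitz_coef // mulrC (eqK_mulr _ (rev_ok x)) //.
  rewrite eA ?coef_poly ?in0 // hpv // rev_ok //.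
- rewrite -(inord_val i) toeplitz_coef // mulrC (eqK_mulr _ (rev_ok y)) //.
  rewrite eB ?coef_poly ?in0 // hpv // rev_ok //.
Qed.
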